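(* Let $\rho_{AB}$ be positive semidefinite on $\mathcal{H}_A\otimes\mathcal{H}_B$ with $0<\operatorname{tr}\rho_{AB}\le1$, and let $\tau_B$ be positive semidefinite on $\mathcal{H}_B$ with $0<\operatorname{tr}\tau_B\le1$ and $\operatorname{supp}\tau_B\supseteq\operatorname{supp}\rho_B$. Then, with $d_A=\dim\mathcal{H}_A$, $$d_u(A|B)_\rho\le\frac12\sqrt{d_A\,\Gamma_C(\rho_{AB}|\tau_B)-\operatorname{tr}\big(\rho_B\tau_B^{-1/2}\rho_B\tau_B^{-1/2}\big)}.$$
   Context: Hilbert spaces are finite-dimensional; inverses are generalized inverses (on the support); $\rho_B=\operatorname{tr}_A\rho_{AB}$. $\Gamma_C(\rho_{AB}|\tau_B):=\operatorname{tr}\big((\rho_{AB}(\mathbb{1}_A\otimes\tau_B^{-1/2}))^2\big)$. Distance from uniform: $d_u(A|B)_\rho=\min_{\sigma_B}\frac12\|\rho_{AB}-\omega_A\otimes\sigma_B\|_1$ where $\omega_A=\mathbb{1}_A/d_A$ and the minimum is over positive semidefinite $\sigma_B$ with $\operatorname{tr}\sigma_B=\operatorname{tr}\rho_B$. *)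

(* Defs.v *)
From HB Require Import structures.
From mathcomp Require Import all_boot all_order all_algebra.
From mathcomp Require Import complex mxtens.
From mathcomp Require Import boolp classical_sets reals.

Set Implicit Arguments.
Unset Strict Implicit.
Unset Printing Implicit Defensive.

Import Order.TTheory GRing.Theory Num.Theory.
Local Open Scope ring_scope.
Local Open Scope sesquilinear_scope.

Section QDefs.
Variable R : realType.
Local Notation C := (R[i]).

Definition psdmx n (A : 'M[C]_n) : Prop :=
  A \is hermsymmx /\ forall v : 'rV[C]_n, 0 <= (v *m A *m v ^t*) 0 0.

(* Functional calculus for Hermitian (normal) matrices via the spectral
   decomposition A = P^-1 diag(sp) P of mathcomp's spectral.v. *)
Definition mxfun n (f : C -> C) (A : 'M[C]_n) : 'M[C]_n :=
  invmx (spectralmx A) *m diag_mx (map_mx f (spectral_diag A)) *m spectralmx A.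

Definition sqrtmx n (A : 'M[C]_n) : 'M[C]_n := mxfun sqrtC A.

(* Generalized inverse square root A^{-1/2} (inverse on the support). *)
Definition invsqrtmx n (A : 'M[C]_n) : 'M[C]_n :=
  mxfun (fun x => if x == 0 then 0 else (sqrtC x)^-1) A.

Definition trnorm n (X : 'M[C]_n) : C := \tr (sqrtmx (X ^t* *m X)).

(* Partial trace over A: rho_B = tr_A rho_AB, with H_A (x) H_B indexed by
   mxtens_index (a, b), matching the Kronecker product tensmx (A *t B). *)
Definition ptrA dA dB (rho : 'M[C]_(dA * dB)) : 'M[C]_dB :=
  \matrix_(b, b') \sum_(a < dA) rho (mxtens_index (a, b)) (mxtens_index (a, b')).

(* supp A = range (column space) of A; the rows of A^T span it. *)
Definition supp_sub n (A B : 'M[C]_n) : bool := (A^T <= B^T)%MS.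

Definition GammaC dA dB (rho : 'M[C]_(dA * dB)) (tau : 'M[C]_dB) : C :=
  let X := rho *m (1%:M *t invsqrtmx tau) in \tr (X *m X).

Definition unif_tens dA dB (sigma : 'M[C]_dB) : 'M[C]_(dA * dB) :=
  (dA%:R)^-1 *: ((1%:M : 'M[C]_dA) *t sigma).

(* d_u(A|B)_rho = min over psd sigma_B with tr sigma_B = tr rho_B of
   1/2 ||rho_AB - omega_A (x) sigma_B||_1 (taken as an infimum over R;
   the trace norm is real, we take its real part). *)
Definition d_u dA dB (rho : 'M[C]_(dA * dB)) : R :=
  inf [set r : R | exists sigma : 'M[C]_dB,
         [/\ psdmx sigma, \tr sigma = \tr (ptrA rho) &
             r = @complex.Re R (trnorm (rho - unif_tens dA sigma)) / 2]].

End QDefs.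

(* Main.v *)
Require Import Defs.
From HB Require Import structures.
From mathcomp Require Import all_boot all_order all_algebra.
From mathcomp Require Import complex mxtens.
From mathcomp Require Import boolp classical_sets reals.
From mathcomp Require Import ring lra.
Import Order.TTheory GRing.Theory Num.Theory.
Local Open Scope ring_scope.
Local Open Scope sesquilinear_scope.
Set Implicit Arguments.
Unset Strict Implicit.
Unset Printing Implicit Defensive.

Section Gen.
Variable C : numClosedFieldType.

Lemma trC_mul m n p (A : 'M[C]_(m,n)) (B : 'M[C]_(n,p)) :
  (A *m B)^t* = B^t* *m A^t*.
Proof. by rewrite trmx_mul map_mxM. Qed.

Lemma trC_add m n (A B : 'M[C]_(m,n)) : (A + B)^t* = A^t* + B^t*.
Proof. by rewrite linearD /= map_mxD. Qed.

Lemma trC_opp m n (A : 'M[C]_(m,n)) : (- A)^t* = - A^t*.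
Proof. by rewrite linearN /= map_mxN. Qed.

Lemma trC1 n : (1%:M : 'M[C]_n)^t* = 1%:M.
Proof. by rewrite trmx1 map_mx1. Qed.

Lemma unitary_VK n (U : 'M[C]_n) : U \is unitarymx -> U^t* *m U = 1%:M.
Proof.
move=> Uu; rewrite -invmx_unitary //; apply: mulVmx; exact: unitarymx_unit.
Qed.

Lemma unitary_KV n (U : 'M[C]_n) : U \is unitarymx -> U *m U^t* = 1%:M.
Proof. by move/unitarymxP. Qed.

Lemma dot_ge0 m n (Y : 'M[C]_(m,n)) i : 0 <= (Y *m Y^t*) i i.
Proof.
rewrite mxE; apply: sumr_ge0 => j _; rewrite !mxE; exact: mul_conjC_ge0.
Qed.

Lemma herm_idem_le n (P : 'M[C]_n) (w : 'rV[C]_n) :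
  P^t* = P -> P *m P = P ->
  (w *m P *m w^t*) 0 0 <= (w *m w^t*) 0 0.
Proof.
move=> hP iP; rewrite -subr_ge0.
have E : w *m w^t* - w *m P *m w^t* = (w - w *m P) *m (w - w *m P)^t*.
  rewrite trC_add trC_opp trC_mul hP mulmxBl !mulmxBr !mulmxA.
  by rewrite -[w *m P *m P]mulmxA iP subrr subr0.
have -> : (w *m w^t*) 0 0 - (w *m P *m w^t*) 0 0 =
   ((w - w *m P) *m (w - w *m P)^t*) 0 0 by rewrite -E !mxE.
exact: dot_ge0.
Qed.

Lemma herm_trC n (M : 'M[C]_n) : M \is hermsymmx -> M^t* = M.
Proof. by move/is_hermitianmxP; rewrite expr0 scale1r => <-. Qed.

Lemma herm_trCE n (M : 'M[C]_n) : M^t* = M -> M \is hermsymmx.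
Proof. by move=> h; apply/is_hermitianmxP; rewrite expr0 scale1r h. Qed.

Lemma entry_row n m (M : 'M[C]_(m,n)) (P : 'M[C]_n) l :
  (M *m P *m M^t*) l l = (row l M *m P *m (row l M)^t*) 0 0.
Proof.
rewrite !mxE; apply: eq_bigr => k _; rewrite !mxE; congr (_ * _).
by apply: eq_bigr => j _; rewrite !mxE.
Qed.

Lemma unit_diag1 n (W : 'M[C]_n) l : W \is unitarymx ->
  (row l W *m (row l W)^t*) 0 0 = 1.
Proof.
move=> Wu; have := entry_row W 1%:M l; rewrite !mulmx1 unitary_KV //.
by rewrite mxE eqxx => <-.
Qed.

Lemma conj_rows_le1 n (W Q : 'M[C]_n) l : W \is unitarymx ->
  (Q *m Q^t*) *m (Q *m Q^t*) = Q *m Q^t* ->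
  \sum_j `|(W *m Q *m W^t*) l j| ^+ 2 <= 1.
Proof.
move=> Wu idem.
have -> : \sum_j `|(W *m Q *m W^t*) l j| ^+ 2 =
   ((W *m Q *m W^t*) *m (W *m Q *m W^t*)^t*) l l.
  by rewrite [RHS]mxE; apply: eq_bigr => j _; rewrite normCK !mxE.
rewrite !trC_mul trmxCK !mulmxA -[W *m Q *m W^t* *m W]mulmxA unitary_VK //.
rewrite mulmx1 -[W *m Q *m Q^t*]mulmxA entry_row -(unit_diag1 l Wu).
by apply: herm_idem_le => //; rewrite trC_mul trmxCK.
Qed.

Lemma conj_cols_le1 n (W Q : 'M[C]_n) l : W \is unitarymx ->
  (Q^t* *m Q) *m (Q^t* *m Q) = Q^t* *m Q ->
  \sum_j `|(W *m Q *m W^t*) j l| ^+ 2 <= 1.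
Proof.
move=> Wu idem.
have -> : \sum_j `|(W *m Q *m W^t*) j l| ^+ 2 =
   ((W *m Q *m W^t*)^t* *m (W *m Q *m W^t*)) l l.
  rewrite [RHS]mxE; apply: eq_bigr => j _; rewrite normCK !mxE mulrC //.
rewrite !trC_mul trmxCK !mulmxA -[W *m Q^t* *m W^t* *m W]mulmxA unitary_VK //.
rewrite mulmx1 -[W *m Q^t* *m Q]mulmxA entry_row -(unit_diag1 l Wu).
by apply: herm_idem_le => //; rewrite trC_mul trmxCK.
Qed.

Lemma QQ_form n (V N X : 'M[C]_n) : N^t* = N ->
  (V^t* *m N *m V *m X^t*) *m (V^t* *m N *m V *m X^t*)^t* =
  V^t* *m (N *m (V *m (X^t* *m X) *m V^t*) *m N) *m V.
Proof. by move=> hN; rewrite !trC_mul !trmxCK hN !mulmxA. Qed.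

Lemma idem_conj n (V E : 'M[C]_n) : V \is unitarymx -> E *m E = E ->
  (V^t* *m E *m V) *m (V^t* *m E *m V) = V^t* *m E *m V.
Proof.
move=> Vu hE; rewrite !mulmxA -(mulmxA (V^t* *m E) V (V^t*)) (unitary_KV Vu).
by rewrite mulmx1 -(mulmxA (V^t*) E E) hE.
Qed.

Lemma QtQ_form n (V N X : 'M[C]_n) : N^t* = N -> V \is unitarymx ->
  (V^t* *m N *m V *m X^t*)^t* *m (V^t* *m N *m V *m X^t*) =
  X *m V^t* *m (N *m N) *m V *m X^t*.
Proof.
move=> hN Vu; rewrite !trC_mul !trmxCK hN !mulmxA.
by rewrite -(mulmxA (X *m V^t* *m N) V (V^t*)) (unitary_KV Vu) mulmx1.
Qed.

Lemma idem2 n (V M X : 'M[C]_n) :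
  (X *m V^t* *m M *m V *m X^t*) *m (X *m V^t* *m M *m V *m X^t*) =
  X *m V^t* *m (M *m (V *m (X^t* *m X) *m V^t*) *m M) *m V *m X^t*.
Proof. by rewrite !mulmxA. Qed.

Lemma trC_entry m n (M : 'M[C]_(m, n)) i j : (M^t*) i j = (M j i)^*.
Proof. by rewrite !mxE. Qed.
Lemma conjU_mul n (W A B : 'M[C]_n) : W \is unitarymx ->
  (W *m A *m W^t*) *m (W *m B *m W^t*) = W *m (A *m B) *m W^t*.
Proof.
move=> Wu; rewrite !mulmxA -(mulmxA (W *m A) (W^t*) W) (unitary_VK Wu) mulmx1.
done.
Qed.

Lemma conjU_tr n (W M : 'M[C]_n) : W \is unitarymx -> \tr (W *m M *m W^t*) = \tr M.
Proof.
move=> Wu; rewrite mxtrace_mulC mulmxA (unitary_VK Wu) mul1mx //.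
Qed.

Lemma conjU_tr4 n (W A K : 'M[C]_n) :
  \tr ((A *m (W^t* *m K *m W)) *m (A *m (W^t* *m K *m W))) =
  \tr ((W *m A *m W^t*) *m K *m ((W *m A *m W^t*) *m K)).
Proof.
have -> : (W *m A *m W^t*) *m K *m ((W *m A *m W^t*) *m K) =
  W *m (A *m W^t* *m K *m W *m A *m W^t* *m K) by rewrite !mulmxA.
by rewrite [RHS]mxtrace_mulC !mulmxA.
Qed.

Lemma tr_mul_sum n (A B : 'M[C]_n) :
  \tr (A *m B) = \sum_j \sum_l A j l * B l j.
Proof. by apply: eq_bigr => j _; rewrite mxE. Qed.

Lemma tr_diag_sum n (A : 'M[C]_n) (d : 'rV[C]_n) :
  \tr ((A *m diag_mx d) *m (A *m diag_mx d)) =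
  \sum_j \sum_l A j l * d 0 l * (A l j * d 0 j).
Proof.
rewrite tr_mul_sum; apply: eq_bigr => j _; apply: eq_bigr => l _.
by rewrite mul_mx_diag !mxE.
Qed.
End Gen.

Local Opaque spectralmx spectral_diag.

Section PB.
Variable R : realType.
Local Notation C := (R[i]).

Lemma herm_XX n (X : 'M[C]_n) : X^t* *m X \is hermsymmx.
Proof. by apply: herm_trCE; rewrite trC_mul trmxCK. Qed.

Lemma spec_dec n (A : 'M[C]_n) : A \is hermsymmx ->
  A = (spectralmx A)^t* *m diag_mx (spectral_diag A) *m spectralmx A.
Proof.
move=> h; have /orthomx_spectralP E := hermitian_normalmx h.
by rewrite {1}E invmx_unitary // spectral_unitarymx.
Qed.

Lemma spec_conj n (A : 'M[C]_n) : A \is hermsymmx ->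
  spectralmx A *m A *m (spectralmx A)^t* = diag_mx (spectral_diag A).
Proof.
move=> h; rewrite {2}(spec_dec h) !mulmxA unitary_KV ?spectral_unitarymx //.
by rewrite mul1mx -mulmxA unitary_KV ?spectral_unitarymx // mulmx1.
Qed.

Lemma tr_mxfun n f (A : 'M[C]_n) :
  \tr (mxfun f A) = \sum_j f (spectral_diag A 0 j).
Proof.
rewrite /mxfun mxtrace_mulC mulmxA mulmxV ?spectral_unit // mul1mx mxtrace_diag.
by apply: eq_bigr => j _; rewrite mxE.
Qed.

Lemma trC_diag_real n (d : 'rV[C]_n) : (forall j, 0 <= d 0 j) ->
  (diag_mx d)^t* = diag_mx d.
Proof.
move=> h; rewrite tr_diag_mx map_diag_mx; congr diag_mx.
by apply/rowP => j; rewrite !mxE; apply: geC0_conj.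
Qed.

Lemma trnormQ n (X : 'M[C]_n) : exists Q : 'M[C]_n,
  [/\ trnorm X = \tr (X *m Q),
      (Q *m Q^t*) *m (Q *m Q^t*) = Q *m Q^t* &
      (Q^t* *m Q) *m (Q^t* *m Q) = Q^t* *m Q].
Proof.
set A := X^t* *m X; set V := spectralmx A; set mu := spectral_diag A.
have hA : A \is hermsymmx by exact: herm_XX.
have Vu : V \is unitarymx by exact: spectral_unitarymx.
have VAV := spec_conj hA; rewrite -/V -/mu in VAV.
have trn : trnorm X = \sum_j sqrtC (mu 0 j) by rewrite /trnorm /sqrtmx tr_mxfun.
clearbody V mu.
have mu_ge0 j : 0 <= mu 0 j.
  have := dot_ge0 (V *m X^t*) j.
  by rewrite trC_mul trmxCK !mulmxA -[V *m _ *m X]mulmxA VAV mxE eqxx mulr1n.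
pose s j := sqrtC (mu 0 j).
have s_ge0 j : 0 <= s j by rewrite sqrtC_ge0.
have s2 j : s j ^+ 2 = mu 0 j by rewrite sqrtCK.
pose N := diag_mx (\row_j (s j)^-1).
have NC : N^t* = N by apply: trC_diag_real => j; rewrite mxE invr_ge0.
pose Q := V^t* *m N *m V *m X^t*.
exists Q; split.
- rewrite trn /Q !mulmxA mxtrace_mulC !mulmxA.
  rewrite (mxtrace_mulC _ V) !mulmxA. rewrite -[V *m X^t* *m X]mulmxA VAV mulmx_diag mxtrace_diag.
  apply: eq_bigr => j _; rewrite !mxE -/(s j) -s2.
  have [->|nz] := eqVneq (s j) 0; first by rewrite invr0 mulr0.
  by field.
- rewrite /Q QQ_form // VAV idem_conj //.
  rewrite /N.
  rewrite !mulmx_diag.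
  congr diag_mx.
  apply/rowP => j.
  rewrite !mxE.
  rewrite -s2.
  have [->|nz] := eqVneq (s j) 0.
    rewrite invr0.
    rewrite !(mul0r,mulr0).
    done.
  field.
  done.
- rewrite /Q QtQ_form // idem2 -/A VAV.
  suff -> : N *m N *m diag_mx mu *m (N *m N) = N *m N by [].
  rewrite /N.
  rewrite !mulmx_diag.
  congr diag_mx.
  apply/rowP => j.
  rewrite !mxE.
  rewrite -s2.
  have [->|nz] := eqVneq (s j) 0.
    rewrite invr0.
    rewrite !(mul0r,mulr0).
    done.
  field.
  done.
Qed.

Lemma psd_ker n (M : 'M[C]_n) (w : 'rV[C]_n) : psdmx M ->
  (w *m M *m w^t*) 0 0 = 0 -> w *m M = 0.
Proof.
move=> [hM pM]; set P := spectralmx M; set p := spectral_diag M.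
have Pu : P \is unitarymx by exact: spectral_unitarymx.
have MD := spec_dec hM; rewrite -/P -/p in MD.
have PMP := spec_conj hM; rewrite -/P -/p in PMP.
clearbody P p.
have p_ge0 i : 0 <= p 0 i.
  have := congr1 (fun A : 'M[C]_n => A i i) PMP.
  by rewrite /= [in RHS]mxE eqxx mulr1n entry_row => <-.
set y := w *m P^t*.
have E : w *m M = y *m diag_mx p *m P by rewrite MD !mulmxA.
have Q : (w *m M *m w^t*) 0 0 = \sum_i p 0 i * (y 0 i * (y 0 i)^*).
  have Py : P *m w^t* = y^t* by rewrite /y trC_mul trmxCK.
  rewrite E -mulmxA Py mul_mx_diag mxE.
  by apply: eq_bigr => i _; rewrite !mxE mulrCA mulrA.
move=> h; rewrite Q in h.
have h2 i : p 0 i * y 0 i = 0.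
  have := psumr_eq0P (fun i _ => mulr_ge0 (p_ge0 i) (mul_conjC_ge0 (y 0 i))) h.
  move=> /(_ i isT) /eqP; rewrite mulf_eq0 mul_conjC_eq0 => /orP[] /eqP ->.
    by rewrite mul0r.
  by rewrite mulr0.
clearbody y; rewrite E mul_mx_diag; apply/matrixP => i j; rewrite !mxE big1 // => k _.
by rewrite !mxE ord1 [y 0 k * _]mulrC h2 mul0r.
Qed.

End PB.

Lemma sum_tens (V : nmodType) m n (F : 'I_(m * n) -> V) :
  \sum_i F i = \sum_(a < m) \sum_(b < n) F (mxtens_index (a, b)).
Proof.
rewrite pair_big /= (reindex (@mxtens_index m n)) /=; last first.
  by exists (@mxtens_unindex m n) => x _; rewrite (mxtens_indexK, mxtens_unindexK).
by apply: eq_bigr => -[a b].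
Qed.

Lemma idx_eq m n (a a' : 'I_m) (b b' : 'I_n) :
  (mxtens_index (a, b) == mxtens_index (a', b')) = (a == a') && (b == b').
Proof. by rewrite (can_eq (@mxtens_indexK _ _)) xpair_eqE. Qed.

Section T.
Variable K : comPzRingType.

Lemma tens1_mul_l m n k (M : 'M[K]_n) (X : 'M[K]_(m * n, k)) a b j :
  ((1%:M : 'M_m) *t M *m X) (mxtens_index (a, b)) j =
  \sum_(b' < n) M b b' * X (mxtens_index (a, b')) j.
Proof.
rewrite mxE sum_tens (bigD1 a) //= [X in _ + X]big1 ?addr0; last first.
  move=> a' ne; apply: big1 => b' _; rewrite tensmxE mxE eq_sym (negbTE ne).
  by rewrite mul0r mul0r.
by apply: eq_bigr => b' _; rewrite tensmxE mxE eqxx mul1r.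
Qed.

Lemma tens1_mul_r m n k (N : 'M[K]_n) (X : 'M[K]_(k, m * n)) i a b :
  (X *m ((1%:M : 'M_m) *t N)) i (mxtens_index (a, b)) =
  \sum_(b' < n) X i (mxtens_index (a, b')) * N b' b.
Proof.
rewrite mxE sum_tens (bigD1 a) //= [X in _ + X]big1 ?addr0; last first.
  move=> a' ne; apply: big1 => b' _; rewrite tensmxE mxE (negbTE ne).
  by rewrite mul0r mulr0.
by apply: eq_bigr => b' _; rewrite tensmxE mxE eqxx mul1r.
Qed.

Lemma tens11 m n : (1%:M : 'M[K]_m) *t (1%:M : 'M[K]_n) = 1%:M.
Proof.
apply/matrixP => i j; case: (mxtens_indexP i) => a b; case: (mxtens_indexP j) => a' b'.
by rewrite tensmxE !mxE (idx_eq a a' b b'); case: (a == a'); case: (b == b');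
  rewrite /= ?(mulr1, mulr0, mul0r).
Qed.

Lemma tens1_mul m n (M N : 'M[K]_n) :
  ((1%:M : 'M_m) *t M) *m ((1%:M : 'M_m) *t N) = (1%:M : 'M_m) *t (M *m N).
Proof. by rewrite tensmx_mul mulmx1. Qed.

End T.

Section P.
Variable R : realType.
Local Notation C := (R[i]).

Lemma ptrA_mul dA dB (M N : 'M[C]_dB) (X : 'M[C]_(dA * dB)) :
  ptrA (((1%:M : 'M_dA) *t M) *m X *m ((1%:M : 'M_dA) *t N)) =
  M *m ptrA X *m N.
Proof.
apply/matrixP => b c; rewrite /ptrA !mxE.
under eq_bigr do rewrite tens1_mul_r.
under eq_bigr do under eq_bigr do rewrite tens1_mul_l.
rewrite exchange_big; apply: eq_bigr => c' _; rewrite mxE mulr_suml.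
under eq_bigr do rewrite mulr_suml.
rewrite exchange_big; apply: eq_bigr => b' _; rewrite mxE mulr_sumr mulr_suml.
by apply: eq_bigr => a _.
Qed.

Lemma tr_ptrA dA dB (X : 'M[C]_(dA * dB)) : \tr (ptrA X) = \tr X.
Proof.
rewrite /mxtrace sum_tens exchange_big; apply: eq_bigr => b _; rewrite mxE.
by apply: eq_bigr.
Qed.

Lemma tr_1t_mul dA dB (M : 'M[C]_dB) (X : 'M[C]_(dA * dB)) :
  \tr (((1%:M : 'M_dA) *t M) *m X) = \tr (M *m ptrA X).
Proof.
rewrite -tr_ptrA -[_ *m X]mulmx1 -(tens11 C dA dB) ptrA_mul.
by rewrite mulmx1.
Qed.

Lemma tr_1t dA dB (M : 'M[C]_dB) :
  \tr ((1%:M : 'M_dA) *t M) = dA%:R * \tr M.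
Proof.
rewrite /mxtrace sum_tens exchange_big mulr_sumr; apply: eq_bigr => b _.
under eq_bigr do rewrite tensmxE mxE eqxx mul1r.
by rewrite sumr_const card_ord mulr_natl.
Qed.

Lemma tC_tens m n p q (A : 'M[C]_(m, n)) (B : 'M[C]_(p, q)) :
  (A *t B)^t* = A^t* *t B^t*.
Proof. by rewrite trmx_tens map_mxT. Qed.

Lemma ptrA_trC dA dB (X : 'M[C]_(dA * dB)) : (ptrA X)^t* = ptrA (X^t*).
Proof.
apply/matrixP => b c; rewrite !mxE rmorph_sum; apply: eq_bigr => a _.
by rewrite !mxE.
Qed.

Lemma psd_ptrA dA dB (X : 'M[C]_(dA * dB)) : psdmx X -> psdmx (ptrA X).
Proof.
move=> [hX pX]; split.
  by apply: herm_trCE; rewrite ptrA_trC herm_trC.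
move=> v.
pose Z := (1%:M : 'M[C]_dA) *t v.
have E : (v *m ptrA X *m v^t*) 0 0 = \tr (Z *m X *m Z^t*).
  rewrite mxtrace_mulC mulmxA /Z tC_tens trC1 tensmx_mul mulmx1.
  rewrite tr_1t_mul -[in RHS]mulmxA (mxtrace_mulC (v^t*)) /mxtrace big_ord1.
  done.
rewrite E /mxtrace; apply: sumr_ge0 => i _; rewrite entry_row; exact: pX.
Qed.

End P.

Section F.
Variable R : rcfType.

Lemma amgm_c (a b u c : R) : 0 <= a -> 0 <= b -> 0 <= u -> 0 < c ->
  (u = 0 -> a = 0) ->
  a * b <= (c * (a ^+ 2 / u) + b ^+ 2 * u / c) / 2.
Proof.
move=> a0 b0 u0 c0 hu.
have [uz|uz] := eqVneq u 0.
  rewrite hu // mul0r; apply: divr_ge0; last by rewrite ler0n.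
  apply: addr_ge0; first by apply: mulr_ge0; [exact: ltW | apply: divr_ge0 => //; exact: sqr_ge0].
  by apply: divr_ge0; [apply: mulr_ge0 => //; exact: sqr_ge0 | exact: ltW].
have up : 0 < u by rewrite lt_def uz.
have E : (c * (a ^+ 2 / u) + b ^+ 2 * u / c) / 2 - a * b =
   (c * a - b * u) ^+ 2 / (2 * c * u).
  by field; rewrite !gt_eqF.
rewrite -subr_ge0 E; apply: divr_ge0; first exact: sqr_ge0.
by apply: mulr_ge0 => //; apply: mulr_ge0 => //; lra.
Qed.

Lemma sqrt_bound (x G D : R) : 0 <= G -> 0 <= D ->
  (forall c, 0 < c -> x <= (c * G + D / c) / 2) -> x <= Num.sqrt (D * G).
Proof.
move=> G0 D0 h.
have h2 c : 0 < c -> 2 * c * x <= c * c * G + D.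
  move=> cp; have := h c cp => hc.
  have e : (c * G + D / c) / 2 * (2 * c) = c * c * G + D by field; rewrite gt_eqF.
  rewrite -e mulrC ler_pM2r //; lra.
have [xle|xgt] := lerP x 0; first by apply: le_trans xle _; exact: sqrtr_ge0.
have [Gz|Gp] := eqVneq G 0.
  have c0 : 0 < D / x + 1 by have := divr_ge0 D0 (ltW xgt); lra.
  have dx : D / x * x = D by rewrite divfK // gt_eqF.
  have := h2 _ c0; rewrite Gz mulr0 add0r; nra.
have Gpos : 0 < G by rewrite lt_def Gp.
have c0 : 0 < x / G by exact: divr_gt0.
have := h2 _ c0; set y := x / G => hy.
have xy : x = y * G by rewrite /y divfK // gt_eqF.
have hx2 : x ^+ 2 <= D * G.
  rewrite xy in hy *; nra.
rewrite -[x]gtr0_norm // -sqrtr_sqr ler_sqrt //; exact: mulr_ge0.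
Qed.

Lemma final_real (I : finType) (a b : I -> I -> R) (s : I -> R) (D x : R) :
  (forall j, 0 <= s j) -> (forall j l, 0 <= a j l) -> (forall j l, 0 <= b j l) ->
  (forall j l, s j * s l = 0 -> a j l = 0) ->
  (forall j, \sum_l b j l ^+ 2 <= 1) -> (forall l, \sum_j b j l ^+ 2 <= 1) ->
  \sum_j s j ^+ 2 <= D ->
  x <= \sum_j \sum_l a j l * b j l ->
  x <= Num.sqrt (D * \sum_j \sum_l a j l ^+ 2 / (s j * s l)).
Proof.
move=> s0 a0 b0 sa rb cb sD hx.
have D0 : 0 <= D.
  by apply: le_trans sD; apply: sumr_ge0 => j _; exact: sqr_ge0.
set G := \sum_j _.
have G0 : 0 <= G.
  apply: sumr_ge0 => j _; apply: sumr_ge0 => l _.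
  by apply: divr_ge0; [exact: sqr_ge0 | exact: mulr_ge0].
set Sb := \sum_j \sum_l b j l ^+ 2 * (s j * s l).
have SbD : Sb <= D.
  have h1 : Sb <= (\sum_j \sum_l b j l ^+ 2 * s j ^+ 2 +
                   \sum_j \sum_l b j l ^+ 2 * s l ^+ 2) / 2.
    rewrite -big_split /= mulr_suml; apply: ler_sum => j _.
    rewrite -big_split /= mulr_suml; apply: ler_sum => l _.
    have := mulr_ge0 (sqr_ge0 (b j l)) (sqr_ge0 (s j - s l)); nra.
  apply: le_trans h1 _.
  have h2 : \sum_j \sum_l b j l ^+ 2 * s j ^+ 2 <= D.
    apply: le_trans sD; apply: ler_sum => j _.
    rewrite -mulr_suml; have := rb j; have := sqr_ge0 (s j); nra.
  have h3 : \sum_j \sum_l b j l ^+ 2 * s l ^+ 2 <= D.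
    rewrite exchange_big /=.
    apply: le_trans sD; apply: ler_sum => l _.
    rewrite -mulr_suml; have := cb l; have := sqr_ge0 (s l); nra.
  lra.
apply: sqrt_bound => // c cp.
apply: (le_trans hx).
have step : \sum_j \sum_l a j l * b j l <=
    \sum_j \sum_l (c * (a j l ^+ 2 / (s j * s l)) + b j l ^+ 2 * (s j * s l) / c) / 2.
  apply: ler_sum => j _; apply: ler_sum => l _.
  by apply: amgm_c => //; [exact: mulr_ge0 | exact: sa].
apply: (le_trans step).
have -> : \sum_j \sum_l (c * (a j l ^+ 2 / (s j * s l)) + b j l ^+ 2 * (s j * s l) / c) / 2
   = (c * G + Sb / c) / 2.
  rewrite /G /Sb mulr_sumr !mulr_suml -big_split /= mulr_suml.
  apply: eq_bigr => j _; rewrite mulr_sumr !mulr_suml -big_split /= mulr_suml.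
  by apply: eq_bigr => l _.
have : Sb / c <= D / c by rewrite ler_pM2r // invr_gt0.
lra.
Qed.

End F.

Section G.
Variable R : rcfType.
Local Notation C := (R[i]).

Lemma ReC (x : R) : complex.Re (x%:C)%C = x. Proof. by []. Qed.

Lemma ge0_C (z : C) : 0 <= z -> z = (complex.Re z)%:C%C.
Proof. by move=> h; rewrite RRe_real // ger0_real. Qed.

Lemma normRe (z : C) : `|z| = (complex.Re `|z|)%:C%C.
Proof. by apply: ge0_C. Qed.

Lemma Re_le (x y : C) : x <= y -> complex.Re x <= complex.Re y.
Proof. by rewrite lecE => /andP[]. Qed.

Lemma Re_le_norm (z : C) : complex.Re z <= complex.Re `|z|.
Proof.
apply: le_trans (Re_le (normc_ge_Re z)); rewrite ReC; exact: ler_norm.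
Qed.

Lemma ReM_real (x y : R) : complex.Re ((x%:C)%C * (y%:C)%C) = x * y.
Proof. by rewrite -rmorphM. Qed.

Lemma Re_sum (I : finType) (F : I -> C) :
  complex.Re (\sum_i F i) = \sum_i complex.Re (F i).
Proof. by rewrite raddf_sum. Qed.
Lemma realCM (x y : R) : ((x * y)%:C)%C = (x%:C)%C * (y%:C)%C.
Proof. exact: rmorphM. Qed.
End G.

Local Opaque spectralmx spectral_diag.

Section Main.
Variable R : realType.
Local Notation C := (R[i]).
Variables (dA dB : nat) (rho : 'M[C]_(dA * dB)) (tau : 'M[C]_dB).
Hypothesis (prho : psdmx rho) (ptau : psdmx tau) (dA_gt0 : (0 < dA)%N).

Let rB := ptrA rho.
Let U := spectralmx tau.
Let t := spectral_diag tau.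
Let g (x : C) := if x == 0 then 0 else (sqrtC x)^-1.
Let W := (1%:M : 'M[C]_dA) *t U.
Let tq := invsqrtmx tau.
Let Kd := (1%:M : 'M[C]_dA) *t diag_mx (map_mx g t).

Lemma Uu : U \is unitarymx. Proof. exact: spectral_unitarymx. Qed.

Lemma tau_herm : tau \is hermsymmx. Proof. by case: ptau. Qed.

Lemma t_ge0 b : 0 <= t 0 b.
Proof.
have := congr1 (fun M : 'M[C]_dB => M b b) (spec_conj tau_herm).
rewrite /= [in RHS]mxE eqxx mulr1n entry_row => <-; by case: ptau.
Qed.

Lemma tr_tau : \tr tau = \sum_b t 0 b.
Proof.
rewrite {1}(spec_dec tau_herm) mxtrace_mulC mulmxA unitary_KV ?Uu // mul1mx.
by rewrite mxtrace_diag.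
Qed.

Lemma Wu : W \is unitarymx.
Proof.
apply/unitarymxP; rewrite /W tC_tens trC1 tensmx_mul mulmx1 unitary_KV ?Uu //.
exact: tens11.
Qed.

Lemma tq_dec : tq = U^t* *m diag_mx (map_mx g t) *m U.
Proof. by rewrite /tq /invsqrtmx /mxfun invmx_unitary ?Uu. Qed.

Lemma T_dec : (1%:M : 'M[C]_dA) *t tq = W^t* *m Kd *m W.
Proof.
by rewrite tq_dec /W /Kd tC_tens trC1 !tens1_mul.
Qed.

Let kv := \row_(j < dA * dB) g (t 0 (mxtens_unindex j).2).

Lemma Kd_diag : Kd = diag_mx kv.
Proof.
apply/matrixP => i j; case: (mxtens_indexP i) => a b; case: (mxtens_indexP j) => a' b'.
rewrite tensmxE !mxE (idx_eq a a' b b') mxtens_indexK /=.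
by case: (a == a'); case: (b == b'); rewrite /= ?(mulr1, mulr0, mul0r, mul1r).
Qed.

Lemma rB_psd : psdmx rB. Proof. exact: psd_ptrA. Qed.

Lemma rho_herm : rho^t* = rho. Proof. by case: prho => h _; exact: herm_trC. Qed.
Lemma rB_herm : rB^t* = rB. Proof. by case: rB_psd => h _; exact: herm_trC. Qed.

Let sA := (dA%:R : C)^-1.
Let Delta := rho - unif_tens dA rB.

Lemma sA_ge0 : 0 <= sA. Proof. by rewrite invr_ge0 ler0n. Qed.

Lemma sA_dA : sA * dA%:R = 1.
Proof. by rewrite mulVf // pnatr_eq0 -lt0n. Qed.

Lemma unifE : unif_tens dA rB = sA *: ((1%:M : 'M[C]_dA) *t rB).
Proof. by []. Qed.

Lemma Delta_herm : Delta^t* = Delta.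
Proof.
rewrite /Delta unifE trC_add trC_opp rho_herm; congr (_ - _).
rewrite linearZ /= map_mxZ tC_tens trC1 rB_herm; congr (_ *: _).
exact: geC0_conj sA_ge0.
Qed.

Let cc := \tr (rB *m tq *m rB *m tq).

Lemma Gamma_id :
  \tr ((Delta *m ((1%:M : 'M[C]_dA) *t tq)) *m (Delta *m ((1%:M : 'M[C]_dA) *t tq)))
  = GammaC rho tau - sA * cc.
Proof.
set T := (1%:M : 'M[C]_dA) *t tq.
set Y := (1%:M : 'M[C]_dA) *t (rB *m tq).
have E1 : Delta *m T = rho *m T - sA *: Y.
  by rewrite /Delta unifE mulmxBl -scalemxAl /T tens1_mul.
have tAY : \tr (rho *m T *m Y) = cc.
  rewrite -mulmxA /T /Y tens1_mul mxtrace_mulC tr_1t_mul -/rB.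
  by rewrite /cc mxtrace_mulC !mulmxA.
have tYA : \tr (Y *m (rho *m T)) = cc by rewrite mxtrace_mulC.
have tYY : \tr (Y *m Y) = dA%:R * cc.
  by rewrite /Y tens1_mul tr_1t /cc !mulmxA.
rewrite E1 mulmxBl !mulmxBr -!scalemxAl -!scalemxAr scalerA.
rewrite !raddfB /= !mxtraceZ tAY tYA tYY /GammaC -/tq -/T.
have -> : sA * sA * (dA%:R * cc) = sA * cc.
  by rewrite mulrA -[sA * sA * dA%:R]mulrA sA_dA mulr1.
by rewrite opprK addNr addr0.
Qed.

Lemma Utau : U *m tau = diag_mx t *m U.
Proof.
have := spec_conj tau_herm; rewrite -/U -/t => <-.
by rewrite -(mulmxA (U *m tau)) unitary_VK ?Uu // mulmx1.
Qed.

Lemma UrB (hs : supp_sub rB tau) b b' : t 0 b = 0 -> (U *m rB) b b' = 0.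
Proof.
move=> tb; move: hs; rewrite /supp_sub => /submxP [D hD].
have -> : rB = tau *m D^T by rewrite -[rB]trmxK hD trmx_mul trmxK.
by rewrite mulmxA Utau -mulmxA mul_diag_mx mxE tb mul0r.
Qed.

Lemma W_rB (hs : supp_sub rB tau) a b : t 0 b = 0 ->
  row (mxtens_index (a, b)) W *m ((1%:M : 'M[C]_dA) *t rB) = 0.
Proof.
move=> tb; rewrite -row_mul /W tens1_mul; apply/rowP => j.
case: (mxtens_indexP j) => a' b'.
by rewrite mxE tensmxE UrB // mulr0 mxE.
Qed.

Lemma W_rho (hs : supp_sub rB tau) a b : t 0 b = 0 ->
  row (mxtens_index (a, b)) W *m rho = 0.
Proof.
move=> tb; apply: psd_ker => //.
set Z := W *m rho *m W^t*.
have pZ : ptrA Z = U *m rB *m U^t*.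
  by rewrite /Z /W tC_tens trC1 ptrA_mul.
have z0 : (ptrA Z) b b = 0.
  rewrite pZ mxE big1 // => k _; by rewrite UrB // mul0r.
have zge0 a' : 0 <= Z (mxtens_index (a', b)) (mxtens_index (a', b)).
  rewrite /Z entry_row; by case: prho.
rewrite mxE in z0.
have := psumr_eq0P (fun i _ => zge0 i) z0 (i := a) isT.
by rewrite /Z entry_row.
Qed.

Lemma W_Delta (hs : supp_sub rB tau) a b : t 0 b = 0 ->
  row (mxtens_index (a, b)) W *m Delta = 0.
Proof.
move=> tb; rewrite /Delta unifE mulmxBr W_rho // -scalemxAr W_rB //.
by rewrite scaler0 subr0.
Qed.

Let Dp := W *m Delta *m W^t*.

Lemma Dp_herm : Dp^t* = Dp.
Proof. by rewrite /Dp !trC_mul trmxCK Delta_herm mulmxA. Qed.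

Lemma Dp_col (hs : supp_sub rB tau) a b j : t 0 b = 0 ->
  Dp j (mxtens_index (a, b)) = 0.
Proof.
move=> tb.
have r : row (mxtens_index (a, b)) Dp = 0.
  by rewrite /Dp !row_mul W_Delta // !mul0mx.
have r0 : Dp (mxtens_index (a, b)) j = 0.
  by have := congr1 (fun M : 'rV[C]_(dA * dB) => M 0 j) r; rewrite /= !mxE.
have := congr1 (fun M : 'M[C]_(dA * dB) => M j (mxtens_index (a, b))) Dp_herm.
rewrite /= trC_entry r0 => <-.
exact: rmorph0.
Qed.

Let rj (j : 'I_(dA * dB)) := t 0 (mxtens_unindex j).2.
Let sr j := complex.Re (sqrtC (rj j)).

Lemma rj_ge0 j : 0 <= rj j. Proof. exact: t_ge0. Qed.

Lemma sqrt_rj j : sqrtC (rj j) = (sr j)%:C%C.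
Proof. by apply: ge0_C; rewrite sqrtC_ge0 rj_ge0. Qed.

Lemma sr_ge0 j : 0 <= sr j.
Proof. by rewrite -lecR -sqrt_rj sqrtC_ge0 rj_ge0. Qed.

Lemma kv_E0 j : kv 0 j = (sqrtC (rj j))^-1.
Proof.
rewrite mxE /g -/(rj j); case: ifP => [/eqP ->|//].
by rewrite sqrtC0 invr0.
Qed.

Lemma kv_E j : kv 0 j = ((sr j)^-1)%:C%C.
Proof. by rewrite kv_E0 sqrt_rj (fmorphV (real_complex R)). Qed.

Lemma sr2 j : sr j ^+ 2 = complex.Re (rj j).
Proof.
have e : rj j = ((sr j) ^+ 2)%:C%C.
  rewrite rmorphXn /=. rewrite -sqrt_rj. by rewrite sqrtCK.
by rewrite e ReC.
Qed.

Lemma sr0 j : sr j = 0 -> rj j = 0.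
Proof. by move=> h; rewrite -[rj j]sqrtCK sqrt_rj h rmorph0 expr0n. Qed.

Lemma Dp_conj j l : Dp l j = (Dp j l)^*.
Proof. by rewrite -{1}Dp_herm trC_entry. Qed.

Lemma Dp_supp (hs : supp_sub rB tau) j l : sr j * sr l = 0 -> Dp j l = 0.
Proof.
have col l' j' : sr l' = 0 -> Dp j' l' = 0.
  move=> /sr0; case: (mxtens_indexP l') => a b.
  by rewrite /rj mxtens_indexK /= => h; apply: Dp_col.
move/eqP; rewrite mulf_eq0 => /orP[] /eqP h.
  by rewrite Dp_conj col // rmorph0.
exact: col.
Qed.

Lemma sq_norm (z : C) : `|z| ^+ 2 = ((complex.Re `|z|) ^+ 2)%:C%C.
Proof. by rewrite {1}normRe rmorphXn. Qed.

Lemma Re_natM (k : nat) (z : C) : complex.Re (k%:R * z) = k%:R * complex.Re z.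
Proof. by rewrite !mulr_natl raddfMn. Qed.

Lemma sum_sr2 (trt : \tr tau <= 1) : \sum_j sr j ^+ 2 <= dA%:R.
Proof.
under eq_bigr do rewrite sr2.
rewrite -Re_sum.
have -> : \sum_j rj j = dA%:R * \tr tau.
  rewrite tr_tau sum_tens.
  have -> : \sum_(a < dA) \sum_(b < dB) rj (mxtens_index (a, b)) =
      \sum_(a < dA) \sum_(b < dB) t 0 b.
    by apply: eq_bigr => a _; apply: eq_bigr => b _; rewrite /rj mxtens_indexK.
  by rewrite sumr_const card_ord mulr_natl.
rewrite Re_natM -[X in _ <= X]mulr1; apply: ler_wpM2l; first exact: ler0n.
by have := Re_le trt; rewrite ReC.
Qed.

Lemma bound_main (hs : supp_sub rB tau) (trt : \tr tau <= 1) :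
  complex.Re (trnorm Delta) <=
  Num.sqrt (complex.Re (dA%:R * GammaC rho tau - cc)).
Proof.
have [Q [trQ idQ1 idQ2]] := trnormQ Delta.
set Qp := W *m Q *m W^t*.
pose a j l := complex.Re `|Dp j l|.
pose b j l := complex.Re `|Qp l j|.
have E1 : trnorm Delta = \sum_j \sum_l Dp j l * Qp l j.
  by rewrite trQ -(conjU_tr (Delta *m Q) Wu) -conjU_mul ?Wu // tr_mul_sum.
have term j l : Dp j l * kv 0 l * (Dp l j * kv 0 j) =
    ((a j l ^+ 2 / (sr j * sr l))%:C)%C.
  rewrite (Dp_conj j l) !kv_E mulrACA -normCK sq_norm -!realCM.
  by congr (_%:C)%C; rewrite invfM [(sr l)^-1 * _]mulrC.
have E2 : complex.Re (dA%:R * GammaC rho tau - cc) =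
    dA%:R * \sum_j \sum_l a j l ^+ 2 / (sr j * sr l).
  have -> : dA%:R * GammaC rho tau - cc = dA%:R * (GammaC rho tau - sA * cc).
    by rewrite mulrBr mulrA [dA%:R * sA]mulrC sA_dA mul1r.
  rewrite -Gamma_id T_dec conjU_tr4 Kd_diag tr_diag_sum Re_natM.
  congr (_ * _); rewrite Re_sum; apply: eq_bigr => j _.
  rewrite Re_sum; apply: eq_bigr => l _.
  by rewrite term ReC.
rewrite E2; apply: (final_real (b := b)).
- exact: sr_ge0.
- by move=> j l; rewrite /a; apply: (Re_le (normr_ge0 (Dp j l))).
- by move=> j l; rewrite /b; apply: (Re_le (normr_ge0 (Qp l j))).
- by move=> j l h; rewrite /a Dp_supp // normr0.
- move=> j; have := conj_cols_le1 j Wu idQ2; rewrite -/Qp.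
  under eq_bigr do rewrite sq_norm.
  by rewrite -rmorph_sum -(rmorph1 (real_complex R)) lecR.
- move=> l; have := conj_rows_le1 l Wu idQ1; rewrite -/Qp.
  under eq_bigr do rewrite sq_norm.
  by rewrite -rmorph_sum -(rmorph1 (real_complex R)) lecR.
- exact: sum_sr2.
rewrite E1; apply: le_trans (Re_le_norm _) _.
have h1 : `|\sum_j \sum_l Dp j l * Qp l j| <= \sum_j \sum_l `|Dp j l| * `|Qp l j|.
  apply: le_trans (ler_norm_sum _ _ _) _; apply: ler_sum => j _.
  apply: le_trans (ler_norm_sum _ _ _) _; apply: ler_sum => l _.
  by rewrite normrM.
apply: le_trans (Re_le h1) _; rewrite Re_sum; apply: ler_sum => j _.
rewrite Re_sum; apply: ler_sum => l _.
by rewrite [`|Dp j l|]normRe [`|Qp l j|]normRe ReM_real.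
Qed.

End Main.


Unset Implicit Arguments.
Set Strict Implicit.
Set Printing Implicit Defensive.
Local Close Scope sesquilinear_scope.

Theorem lemma4 (R : realType) (dA dB : nat)
    (rho : 'M[R[i]]_(dA * dB)) (tau : 'M[R[i]]_dB) :
  psdmx rho -> 0 < \tr rho -> \tr rho <= 1 ->
  psdmx tau -> 0 < \tr tau -> \tr tau <= 1 ->
  supp_sub (ptrA rho) tau ->
  d_u rho <=
    Num.sqrt (@complex.Re R (dA%:R * GammaC rho tau
       - \tr (ptrA rho *m invsqrtmx tau *m ptrA rho *m invsqrtmx tau))) / 2.
Proof.
move=> prho trp trp1 ptau trt0 trt1 hs.
have dA_gt0 : (0 < dA)%N.
  rewrite lt0n; apply/eqP => h; move: trp; rewrite /mxtrace big1 ?ltxx //.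
  by move=> [k hk]; exfalso; move: hk; rewrite h mul0n.
rewrite /d_u.
set S := (X in inf X <= _).
have [hlb|nlb] := pselect (has_lbound S).
  apply: le_trans (ge_inf hlb _) _.
    exists (ptrA rho); split => //; exact: psd_ptrA.
  apply: ler_wpM2r; first by rewrite invr_ge0 ler0n.
  exact: bound_main.
rewrite inf_out; last by case.
by apply: divr_ge0; [exact: sqrtr_ge0 | exact: ler0n].
Qed.
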